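(* Let $A$ be a unique factorization domain and $R$ a subring of $A$ whose group of units equals that of $A$. Then $\operatorname{Irr}R\subset\operatorname{Irr}A$ if and only if $R$ is factorially closed in $A$, i.e. for all $x,y\in A$, $xy\in R\setminus\{0\}$ implies $x,y\in R$.
   Context: $\operatorname{Irr}R$ denotes the set of irreducible elements of a ring $R$. *)

(* Defs.v *)
From HB Require Import structures.
From mathcomp Require Import all_boot all_order all_algebra.
Set Implicit Arguments. Unset Strict Implicit. Unset Printing Implicit Defensive.
Import GRing.Theory.
Local Open Scope ring_scope.

Section Defs.
Variable A : idomainType.

Definition sunit (S : {pred A}) (x : A) : Prop :=
  x \in S /\ exists y, y \in S /\ x * y = 1.

Definition sirr (S : {pred A}) (x : A) : Prop :=
  [/\ x \in S, x != 0, ~ sunit S x &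
      forall a b, a \in S -> b \in S -> x = a * b -> sunit S a \/ sunit S b].

Definition irr (x : A) : Prop := sirr predT x.

Definition associated (a b : A) : Prop :=
  exists u, u \is a GRing.unit /\ a = u * b.

Definition is_UFD : Prop :=
  (forall x : A, x != 0 -> x \isn't a GRing.unit ->
     exists s : seq A, (forall p, p \in s -> irr p) /\ x = \prod_(p <- s) p)
  /\
  (forall s t : seq A, (forall p, p \in s -> irr p) -> (forall p, p \in t -> irr p) ->
     \prod_(p <- s) p = \prod_(p <- t) p ->
     size s = size t /\
     exists f : 'I_(size s) -> 'I_(size t),
       injective f /\ forall i : 'I_(size s), associated (nth 0 s i) (nth 0 t (f i))).

Definition is_subring (S : {pred A}) : Prop :=
  [/\ 1 \in S, {in S &, forall x y, x - y \in S} & {in S &, forall x y, x * y \in S}].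

Definition fact_closed (S : {pred A}) : Prop :=
  forall x y : A, x * y \in S -> x * y != 0 -> x \in S /\ y \in S.

End Defs.

(* Main.v *)
Require Import Defs.
From HB Require Import structures.
From mathcomp Require Import all_boot all_order all_algebra.
From mathcomp Require Import ring zify.
From Stdlib Require Import Classical.
Set Implicit Arguments. Unset Strict Implicit. Unset Printing Implicit Defensive.
Import GRing.Theory.
Local Open Scope ring_scope.

Section Aux.
Variable A : idomainType.

Lemma sunitT (x : A) : sunit predT x <-> x \is a GRing.unit.
Proof.
split.
  by move=> [_ [y [_ hy]]]; apply/unitrP; exists y; split; rewrite // mulrC.
by move=> hx; split=> //; exists x^-1; split=> //; exact: mulrV.
Qed.

Lemma unit_neq0 (k : A) : k \is a GRing.unit -> k != 0.
Proof. by move=> hk; apply/eqP => k0; move: hk; rewrite k0 unitr0. Qed.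

Lemma irr_unit (p k : A) : irr p -> k \is a GRing.unit -> irr (p * k).
Proof.
move=> [_ hp0 hpu hpf] hk; split=> //.
- by rewrite mulf_neq0 // unit_neq0.
- move/sunitT; rewrite unitrM hk andbT => /sunitT; exact: hpu.
move=> a b _ _ e.
have : p = a * (b * k^-1) by rewrite mulrA -e mulrK.
move/(hpf a (b * k^-1) isT isT) => [h|h]; [by left|right].
move/sunitT: h; rewrite unitrM => /andP [hb _]; exact/sunitT.
Qed.

Lemma fact_any (hU : is_UFD A) (z : A) : z != 0 ->
  exists c s, [/\ c \is a GRing.unit, (forall p, p \in s -> irr p) &
     z = c * \prod_(p <- s) p].
Proof.
move=> z0; case: (boolP (z \is a GRing.unit)) => hz.
  by exists z, [::]; split=> //; rewrite big_nil mulr1.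
have [s [hs e]] := hU.1 z z0 hz.
by exists 1, s; split; rewrite ?unitr1 // mul1r.
Qed.

Lemma dvd_mem (s : seq A) q : q \in s -> exists r, \prod_(p <- s) p = q * r.
Proof. by move=> hq; exists (\prod_(p <- rem q s) p); rewrite (big_rem q hq). Qed.

Lemma irr_prime (hU : is_UFD A) (p a b k : A) : irr p -> a * b = p * k ->
  (exists r, a = p * r) \/ (exists r, b = p * r).
Proof.
move=> hp e.
have [->|a0] := eqVneq a 0; first by left; exists 0; rewrite mulr0.
have [->|b0] := eqVneq b 0; first by right; exists 0; rewrite mulr0.
have k0 : k != 0.
  by apply/eqP => k0; move: e; rewrite k0 mulr0 => /eqP; rewrite mulf_eq0 (negbTE a0) (negbTE b0).
have [ca [sa [hca hsa ea]]] := fact_any hU a0.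
have [cb [sb [hcb hsb eb]]] := fact_any hU b0.
have [ck [sk [hck hsk ek]]] := fact_any hU k0.
set u := (ca * cb)^-1.
have hu : (ca * cb) * u = 1 by rewrite mulrV // unitrM hca hcb.
have uu : u \is a GRing.unit by rewrite unitrV unitrM hca hcb.
set c := ck * u.
have hc : c \is a GRing.unit by rewrite unitrM hck uu.
have ee : \prod_(q <- (p * c) :: sk) q = \prod_(q <- sa ++ sb) q.
  rewrite big_cons big_cat /=.
  apply: (mulfI (unit_neq0 (_ : ca * cb \is a GRing.unit))); first by rewrite unitrM hca hcb.
  transitivity (p * (ck * \prod_(q <- sk) q) * ((ca * cb) * u)); first by rewrite /c; ring.
  rewrite hu mulr1 -ek -e ea eb; ring.
have hs1 : forall q, q \in (p * c) :: sk -> irr q.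
  by move=> q; rewrite inE => /orP [/eqP ->|/hsk //]; exact: irr_unit.
have hs2 : forall q, q \in sa ++ sb -> irr q.
  by move=> q; rewrite mem_cat => /orP [/hsa|/hsb].
have [_ [f [_ hf]]] := hU.2 _ _ hs1 hs2 ee.
have [w [hw ew]] := hf (Ordinal (ltn0Sn (size sk))).
move: ew; rewrite /= => ew.
set q := nth 0 (sa ++ sb) (f (Ordinal (ltn0Sn (size sk)))) in ew.
have qin : q \in sa ++ sb by apply: mem_nth; exact: ltn_ord.
have hq : q = p * (c * w^-1) by rewrite mulrA ew mulrC mulKr.
move: qin; rewrite mem_cat => /orP [/dvd_mem [r hr]|/dvd_mem [r hr]].
  by left; exists (c * w^-1 * r * ca); rewrite ea hr hq; ring.
by right; exists (c * w^-1 * r * cb); rewrite eb hr hq; ring.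
Qed.

Variable R : {pred A}.
Hypothesis hU : is_UFD A.
Hypothesis hsub : is_subring R.
Hypothesis hun : forall u : A, sunit R u <-> u \is a GRing.unit.

Lemma factR (hirr : forall x, sirr R x -> irr x) n :
  forall z (s : seq A), z \in R -> z != 0 -> (forall p, p \in s -> irr p) ->
  z = \prod_(p <- s) p -> (size s < n)%N ->
  exists c t, [/\ c \is a GRing.unit, (forall p, p \in t -> p \in R /\ irr p) &
     z = c * \prod_(p <- t) p].
Proof.
elim: n => [//|n IH] z s zR z0 hs ez hn.
case: (boolP (z \is a GRing.unit)) => zu.
  by exists z, [::]; split=> //; rewrite big_nil mulr1.
have znr : ~ sunit R z by move/hun; rewrite (negbTE zu).
case: (classic (sirr R z)) => hz.
  exists 1, [:: z]; split; first exact: unitr1.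
    by move=> p; rewrite inE => /eqP ->; split=> //; exact: hirr.
  by rewrite big_seq1 mul1r.
have : exists a b, [/\ a \in R, b \in R, z = a * b, ~ sunit R a & ~ sunit R b].
  apply: NNPP => hne; apply: hz; split=> // a b aR bR e.
  case: (classic (sunit R a)) => ha; first by left.
  case: (classic (sunit R b)) => hb; first by right.
  by exfalso; apply: hne; exists a, b; split.
case=> a [b [aR bR eab na nb]].
have au : a \isn't a GRing.unit by apply/negP => /hun.
have bu : b \isn't a GRing.unit by apply/negP => /hun.
have a0 : a != 0.
  by apply/eqP => a0; move: z0; rewrite eab a0 mul0r eqxx.
have b0 : b != 0.
  by apply/eqP => b0; move: z0; rewrite eab b0 mulr0 eqxx.
have [sa [hsa ea]] := hU.1 a a0 au.
have [sb [hsb eb]] := hU.1 b b0 bu.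
have e : \prod_(p <- s) p = \prod_(p <- sa ++ sb) p by rewrite big_cat /= -ea -eb -eab -ez.
have hs2 : forall q, q \in sa ++ sb -> irr q.
  by move=> q; rewrite mem_cat => /orP [/hsa|/hsb].
have [hsz _] := hU.2 _ _ hs hs2 e.
rewrite size_cat in hsz.
have sa1 : (0 < size sa)%N.
  rewrite lt0n size_eq0; apply/negP => /eqP sa0; move: au; rewrite ea sa0 big_nil unitr1.
  by [].
have sb1 : (0 < size sb)%N.
  rewrite lt0n size_eq0; apply/negP => /eqP sb0; move: bu; rewrite eb sb0 big_nil unitr1.
  by [].
have [ca [ta [hca hta eta]]] := IH a sa aR a0 hsa ea ltac:(lia).
have [cb [tb [hcb htb etb]]] := IH b sb bR b0 hsb eb ltac:(lia).
exists (ca * cb), (ta ++ tb); split.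
- by rewrite unitrM hca hcb.
- by move=> q; rewrite mem_cat => /orP [/hta|/htb].
by rewrite eab eta etb big_cat /=; ring.
Qed.

Lemma inR_of_prod (s : seq A) : (forall p, p \in s -> p \in R /\ irr p) ->
  forall c x y, c \is a GRing.unit -> x * y = c * \prod_(p <- s) p -> x \in R.
Proof.
elim: s => [|p s IH] hs c x y hc e.
  rewrite big_nil mulr1 in e.
  have : x * y \is a GRing.unit by rewrite e.
  rewrite unitrM => /andP [hx _].
  by have [] := (hun x).2 hx.
rewrite big_cons in e.
have [pR pirr] := hs p (mem_head p s).
have hs' : forall q, q \in s -> q \in R /\ irr q.
  by move=> q qs; apply: hs; rewrite inE qs orbT.
have e2 : x * y = p * (c * \prod_(q <- s) q) by rewrite e; ring.
have p0 : p != 0 by case: pirr.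
case: hsub => _ _ hm.
case: (irr_prime hU pirr e2) => [[r xr]|[r yr]].
  have : r * y = c * \prod_(q <- s) q.
    by apply: (mulfI p0); rewrite mulrA -xr e2.
  move/(IH hs' c r y hc) => rR.
  by rewrite xr; exact: hm.
have : x * r = c * \prod_(q <- s) q.
  by apply: (mulfI p0); rewrite mulrCA -yr e2.
exact: IH hs' c x r hc.
Qed.

End Aux.

Theorem lemma3p2 (A : idomainType) (R : {pred A}) :
  is_UFD A -> is_subring R ->
  (forall u : A, sunit R u <-> u \is a GRing.unit) ->
  ((forall x : A, sirr R x -> irr x) <-> fact_closed R).
Proof.
move=> hU hsub hun; split.
  move=> hirr x y xyR xy0.
  have [c [t [hc ht e]]] : exists c t, [/\ c \is a GRing.unit,
      (forall p, p \in t -> p \in R /\ irr p) & x * y = c * \prod_(p <- t) p].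
    case: (boolP (x * y \is a GRing.unit)) => hu.
      by exists (x * y), [::]; split=> //; rewrite big_nil mulr1.
    have [s [hs es]] := hU.1 _ xy0 hu.
    exact: (factR hU hun hirr (n := (size s).+1) xyR xy0 hs es).
  split; first exact: (inR_of_prod hU hsub hun ht hc e).
  by apply: (inR_of_prod hU hsub hun ht hc (y := x)); rewrite mulrC.
move=> hfc x [xR x0 xnu xf]; split=> //.
  by move/sunitT/hun.
move=> a b _ _ e.
have abR : a * b \in R by rewrite -e.
have ab0 : a * b != 0 by rewrite -e.
have [aR bR] := hfc a b abR ab0.
case: (xf a b aR bR e) => h; [left|right]; apply/sunitT/hun => //.
Qed.
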